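(* Let $k\ge 2$ and $m\ge1$ be integers. Let $U_k$ be the $(2^k-1-k)\times(2^k-1)$ binary matrix whose columns are indexed by $1,\dots,2^k-1$ and whose rows are indexed by the integers $r\in\{1,\dots,2^k-1\}$ that are not powers of $2$, where the row indexed by $r$, with $2^t<r<2^{t+1}$, has $1$-entries exactly in columns $r$, $r-2^t$, $2^t$. Let $T_k$ be the square $(2^k-1-k)\times(2^k-1-k)$ submatrix of $U_k$ formed by the columns whose index is not a power of $2$, and $R_k$ the $(2^k-1-k)\times k$ submatrix formed by the columns indexed by $2^{k-1},\dots,2,1$ (in this order). Define the $((2^k-1)m-k)\times((2^k-1)m)$ binary block matrix \[ U_{k,m}=\left(\begin{array}{ccc|c|c} T_k&&&&R_k\\ &\ddots&&&\vdots\\ &&T_k&&R_k\\\hline &&&I_{(m-1)k}&\begin{array}{c}I_k\\ \vdots\\ I_k\end{array} \end{array}\right), \] where there are $m$ diagonal copies of $T_k$, the last block column consists of $m$ copies of $R_k$ stacked above $m-1$ copies of $I_k$, and all unspecified blocks are zero. Then $u(U_{k,m})\ge 2^{k-1}m$.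
   Context: All matrices are binary; $I_j$ is the $j\times j$ identity. For a nonempty set $S$ of columns of a binary matrix, let $z$ be the sum over the integers of the columns in $S$; $S$ is $1$-free if no entry of $z$ equals $1$. For a binary $m'\times n'$ matrix $A$ with $m'<n'$, $u(A)$ is the smallest cardinality of a nonempty $1$-free set of columns of $A$. *)

(* Defs.v *)
From mathcomp Require Import all_boot all_algebra.
Set Implicit Arguments. Unset Strict Implicit. Unset Printing Implicit Defensive.

Definition one_free (m' n' : nat) (A : 'M[bool]_(m', n')) (S : {set 'I_n'}) : bool :=
  [forall i : 'I_m', (\sum_(j in S) (A i j : nat))%N != 1%N].

(* u(A): smallest cardinality of a nonempty 1-free set of columns
   (the default n'.+1 is never attained when m' < n', since such a set exists). *)
Definition u (m' n' : nat) (A : 'M[bool]_(m', n')) : nat :=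
  \big[minn/n'.+1]_(S : {set 'I_n'} | (S != set0) && one_free A S) #|S|.

Definition is_pow2 (r : nat) : bool := 2 ^ trunc_log 2 r == r.

(* the row labels of U_k: integers in 1..2^k-1 that are not powers of 2,
   in increasing order; row number a of U_k has label nth 0 (nonpow k) a *)
Definition nonpow (k : nat) : seq nat := [seq r <- iota 1 (2 ^ k - 1) | ~~ is_pow2 r].

(* entry of U_k in row number a at the column with LABEL c (c in 1..2^k-1):
   with r the row label and 2^t < r < 2^(t+1), ones exactly at c = r, r-2^t, 2^t *)
Definition Uk_lab (k a c : nat) : bool :=
  let r := nth 0 (nonpow k) a in
  let t := trunc_log 2 r in
  [|| c == r, c == r - 2 ^ t | c == 2 ^ t].

(* U_k itself: column j : 'I_(2^k-1) has label j+1 *)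
Definition Uk (k : nat) : 'M[bool]_(2 ^ k - 1 - k, 2 ^ k - 1) :=
  \matrix_(i, j) Uk_lab k i j.+1.

Definition Tk_ent (k a b : nat) : bool := Uk_lab k a (nth 0 (nonpow k) b).
Definition Tk (k : nat) : 'M[bool]_(2 ^ k - 1 - k) := \matrix_(i, j) Tk_ent k i j.

Definition Rk_ent (k a b : nat) : bool := Uk_lab k a (2 ^ (k - 1 - b)).
Definition Rk (k : nat) : 'M[bool]_(2 ^ k - 1 - k, k) := \matrix_(i, j) Rk_ent k i j.

(* With p = 2^k-1-k:
   rows    : m blocks of p rows (T_k's),  then (m-1)k rows (identity part);
   columns : m blocks of p columns (T_k's), then (m-1)k columns (I_{(m-1)k}),
             then k columns (R_k's stacked over I_k's). *)
Definition Ukm_ent (k m i j : nat) : bool :=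
  let p := 2 ^ k - 1 - k in
  if i < m * p then
    if j < m * p then (j %/ p == i %/ p) && Tk_ent k (i %% p) (j %% p)
    else if j < m * p + (m - 1) * k then false
    else Rk_ent k (i %% p) (j - (m * p + (m - 1) * k))
  else
    if j < m * p then false
    else if j < m * p + (m - 1) * k then j - m * p == i - m * p
    else j - (m * p + (m - 1) * k) == (i - m * p) %% k.

(* U_{k,m}, of size (m p + (m-1) k) x (m p + (m-1) k + k), which for m >= 1
   is ((2^k-1)m - k) x ((2^k-1)m). *)
Definition Ukm (k m : nat) :
  'M[bool]_(m * (2 ^ k - 1 - k) + (m - 1) * k, m * (2 ^ k - 1 - k) + (m - 1) * k + k) :=
  \matrix_(i, j) Ukm_ent k m i j.

(* Main.v *)
Require Import Defs.
From mathcomp Require Import all_boot all_algebra.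
From mathcomp Require Import zify.

Definition W k (P : nat -> bool) := forall r, 0 < r < 2^k -> ~~ is_pow2 r ->
  count P [:: r; r - 2^(trunc_log 2 r); 2^(trunc_log 2 r)] != 1.

Lemma tl_range k c : 2^k <= c < 2^k.+1 -> trunc_log 2 c = k.
Proof. by move=> h; apply: trunc_log_eq. Qed.

Lemma pow2_range k c : 2^k < c < 2^k.+1 -> ~~ is_pow2 c.
Proof.
move=> /andP[h1 h2]; rewrite /is_pow2 (@tl_range k); last by rewrite h2 ltnW.
by rewrite neq_ltn h1.
Qed.

Lemma is_pow2_exp e : is_pow2 (2^e).
Proof. by rewrite /is_pow2 trunc_expnK. Qed.

Lemma W_step k P : W k.+1 P -> forall s, 0 < s < 2^k ->
  count P [:: 2^k + s; s; 2^k] != 1.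
Proof.
move=> hW s /andP[s0 s1].
have hr : 2^k < 2^k + s < 2^k.+1 by rewrite expnS; apply/andP; split; lia.
have := hW (2^k + s).
rewrite (@tl_range k); last by move: hr => /andP[a b]; rewrite b ltnW.
rewrite addKn; apply; last exact: pow2_range hr.
move: hr => /andP[a b]; rewrite b andbT; lia.
Qed.

Arguments W_step {k P} _ {s}.

Lemma W_down k P : W k.+1 P -> W k P.
Proof.
move=> hW r /andP[r0 r1]; apply: hW; rewrite r0 /=.
apply: (leq_trans r1); rewrite leq_exp2l //.
Qed.

Arguments W_down {k P}.

Lemma splitsum k (P : nat -> bool) :
  \sum_(1 <= c < 2^k.+1) P c =
  \sum_(1 <= c < 2^k) P c + P (2^k) + \sum_(1 <= s < 2^k) P (2^k + s).
Proof.
have e1 : 1 <= 2^k by rewrite expn_gt0.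
have e2 : 2^k <= 2^k.+1 by rewrite leq_exp2l.
have e3 : 2^k < 2^k.+1 by rewrite ltn_exp2l.
rewrite (@big_cat_nat _ _ _ (2^k)) //= (@big_ltn _ _ _ (2^k)) //.
rewrite -addnA; congr (_ + (_ + _)).
rewrite -[(2^k).+1]add1n big_addn.
have -> : 2^k.+1 - 2^k = 2^k by rewrite expnS; lia.
by apply: eq_bigr => i _; rewrite addnC.
Qed.

Lemma lemB k P : W k P -> (forall e, e < k -> ~~ P (2^e)) ->
  forall c, 0 < c < 2^k -> ~~ P c.
Proof.
elim: k => [|k IH] hW hP c /andP[c0 c1].
  by move: c1; rewrite expn0; lia.
have hW' := W_down hW.
have IH' := IH hW' (fun e he => hP e (ltnW he)).
case: (ltnP c (2^k)) => hc; first by apply: IH'; rewrite c0.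
case: (eqVneq c (2^k)) => [->|hne]; first exact: hP.
have hs : 0 < c - 2^k < 2^k by move: c1; rewrite expnS; lia.
have := W_step hW hs; rewrite subnKC //.
have := IH' _ hs; have := hP k (ltnSn k).
by rewrite /=; case: (P c); case: (P (2^k)); case: (P (c - 2^k)).
Qed.

Lemma lemA k P : W k P -> (exists2 e, e < k & P (2^e)) ->
  2^(k.-1) <= \sum_(1 <= c < 2^k) P c.
Proof.
elim: k => [|k IH] hW [e he hPe]; first by [].
have hW' := W_down hW.
rewrite splitsum /=.
case hk: (P (2^k)).
- have : \sum_(1 <= s < 2^k) 1 <= \sum_(1 <= s < 2^k) (P s + P (2^k + s)).
    rewrite big_nat_cond [X in _ <= X]big_nat_cond.
    apply: leq_sum => s /andP[hs _].
    have := W_step hW hs; rewrite /= hk.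
    by case: (P s); case: (P (2^k + s)).
  rewrite big_split /= sum_nat_const_nat muln1 => h.
  have : 1 <= 2^k by rewrite expn_gt0.
  lia.
- have heq : \sum_(1 <= s < 2^k) P (2^k + s) = \sum_(1 <= s < 2^k) P s.
    rewrite big_nat_cond [RHS]big_nat_cond.
    apply: eq_bigr => s /andP[hs _].
    have := W_step hW hs; rewrite /= hk.
    by case: (P s); case: (P (2^k + s)).
  rewrite heq addn0.
  have ek : e < k by case: (ltngtP e k) => // ee; [lia| by move: hPe; rewrite ee hk].
  have := IH hW' (ex_intro2 _ _ e ek hPe).
  case: k {IH hW hW' hk heq he} ek => // k _.
  by rewrite /= expnS; lia.
Qed.

Lemma powsum k (F : nat -> nat) :
  \sum_(1 <= c < 2^k | is_pow2 c) F c = \sum_(0 <= e < k) F (2^e).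
Proof.
elim: k => [|k IH]; first by rewrite !big_geq.
have e1 : 1 <= 2^k by rewrite expn_gt0.
have e2 : 2^k <= 2^k.+1 by rewrite leq_exp2l.
have e3 : 2^k < 2^k.+1 by rewrite ltn_exp2l.
rewrite (@big_cat_nat _ _ _ (2^k)) //= IH big_nat_recr //=; congr (_ + _).
rewrite big_ltn_cond // is_pow2_exp big_nat_cond big_pred0 ?addn0 //.
move=> c /=; apply/negbTE; apply/negP => /andP[/andP[h1 h2] h3].
by move: h3; apply/negP; apply: (@pow2_range k); rewrite h1 h2.
Qed.

Lemma mem_nonpow k c : (c \in nonpow k) = (0 < c < 2^k) && ~~ is_pow2 c.
Proof.
rewrite /nonpow mem_filter mem_iota andbC; congr (_ && _).
have : 0 < 2^k by rewrite expn_gt0.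
lia.
Qed.

Lemma nonpow_uniq k : uniq (nonpow k).
Proof. by rewrite filter_uniq // iota_uniq. Qed.

Lemma conv0 k (F : nat -> nat) :
  \sum_(1 <= c < 2^k) F c = \sum_(c <- nonpow k) F c + \sum_(0 <= e < k) F (2^e).
Proof.
rewrite (bigID is_pow2) /= addnC powsum; congr (_ + _).
by rewrite /nonpow big_filter /index_iota.
Qed.

Lemma size_nonpow k : size (nonpow k) = 2^k - 1 - k.
Proof.
have := conv0 k (fun _ => 1).
rewrite !sum1_size /index_iota !size_iota => h.
lia.
Qed.

Lemma conv k (F : nat -> nat) :
  \sum_(1 <= c < 2^k) F c = \sum_(0 <= q < 2^k - 1 - k) F (nth 0 (nonpow k) q)
     + \sum_(0 <= j < k) F (2^(k - 1 - j)).
Proof.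
rewrite conv0 (big_nth 0) size_nonpow; congr (_ + _).
rewrite big_nat_rev /=; apply: eq_big_nat => i /andP[_ hi].
by rewrite add0n; congr (F (2 ^ _)); lia.
Qed.

Lemma memsum (Q : nat -> bool) lo hi (l : seq nat) :
  uniq l -> all (fun x => lo <= x < hi) l ->
  \sum_(lo <= j < hi) (Q j && (j \in l)) = count Q l.
Proof.
elim: l => [|x l IH] /=.
  by move=> _ _; rewrite big1 // => j _; rewrite andbF.
move=> /andP[xl ul] /andP[hx al]; rewrite -IH //.
rewrite (_ : \sum_(lo <= j < hi) (Q j && (j \in x :: l)) =
   \sum_(lo <= j < hi) (Q j && (j == x)) + \sum_(lo <= j < hi) (Q j && (j \in l))).
  congr (_ + _).
  by rewrite -big_mkcondr /= big_nat1_cond_eq hx /=; case: (Q x).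
rewrite (@eq_bigr _ _ _ _ _ _ _ (fun j => (Q j && (j == x)) + (Q j && (j \in l)))) ?big_split // => j _.
rewrite in_cons.
case: (eqVneq j x) => [->|_] /=; last by rewrite andbF.
by rewrite (negbTE xl) andbT andbF addn0.
Qed.

Lemma shiftsum a n (G : nat -> nat) :
  \sum_(a <= j < a + n) G j = \sum_(0 <= i < n) G (a + i).
Proof.
rewrite -{1}[a]add0n big_addn (addnC a n) addnK.
by apply: eq_bigr => i _; rewrite addnC.
Qed.

Lemma blocksum m p (G : nat -> nat) :
  \sum_(0 <= j < m * p) G j = \sum_(0 <= b < m) \sum_(0 <= q < p) G (b * p + q).
Proof.
elim: m => [|m IH]; first by rewrite mul0n !big_geq.
rewrite big_nat_recr //= -IH mulSn addnC (@big_cat_nat _ _ _ (m * p) 0 (m*p+p)) ?leq_addr //=.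
by rewrite shiftsum.
Qed.

Lemma periodsum n k (G : nat -> nat) :
  \sum_(0 <= e < n * k) G (e %% k) = n * \sum_(0 <= e < k) G e.
Proof.
elim: n => [|n IH]; first by rewrite mul0n big_geq.
rewrite mulSn addnC (@big_cat_nat _ _ _ (n * k) 0 (n*k+k)) ?leq_addr //=.
rewrite IH (shiftsum (n * k) k) mulSn addnC; congr (_ + _).
apply: eq_big_nat => i /andP[_ hi].
by rewrite modnMDl modn_small.
Qed.

Lemma regions m p k (G : nat -> nat) :
  \sum_(0 <= j < m * p + (m - 1) * k + k) G j =
  \sum_(0 <= b < m) \sum_(0 <= q < p) G (b * p + q)
  + \sum_(0 <= e < (m - 1) * k) G (m * p + e)
  + \sum_(0 <= j < k) G (m * p + (m - 1) * k + j).
Proof.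
rewrite (@big_cat_nat _ _ _ (m * p + (m - 1) * k) 0 (m * p + (m - 1) * k + k)); [|done|exact: leq_addr]; rewrite /=.
rewrite (@big_cat_nat _ _ _ (m * p) 0 (m * p + (m - 1) * k)); [|done|exact: leq_addr]; rewrite /=.
by rewrite blocksum (shiftsum (m * p)) (shiftsum (m * p + (m - 1) * k)).
Qed.

Definition colb k m b c :=
  if is_pow2 c then m * (2^k-1-k) + (m-1)*k + (k - 1 - trunc_log 2 c)
  else b * (2^k-1-k) + index c (nonpow k).

Lemma colb_nonpow k m b q : q < 2^k-1-k ->
  colb k m b (nth 0 (nonpow k) q) = b * (2^k-1-k) + q.
Proof.
move=> hq; have hs : q < size (nonpow k) by rewrite size_nonpow.
have := mem_nth 0 hs; rewrite mem_nonpow => /andP[_ hnp].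
by rewrite /colb (negbTE hnp) index_uniq // nonpow_uniq.
Qed.

Lemma colb_pow k m b j : j < k ->
  colb k m b (2^(k-1-j)) = m * (2^k-1-k) + (m-1)*k + j.
Proof.
move=> hj; rewrite /colb is_pow2_exp trunc_expnK //; congr (_ + _); lia.
Qed.

Lemma labsum k m b (R : nat -> nat -> nat) :
  \sum_(1 <= c < 2^k) R c (colb k m b c) =
  \sum_(0 <= q < 2^k-1-k) R (nth 0 (nonpow k) q) (b * (2^k-1-k) + q)
  + \sum_(0 <= j < k) R (2^(k-1-j)) (m * (2^k-1-k) + (m-1)*k + j).
Proof.
rewrite conv; congr (_ + _); apply: eq_big_nat => i /andP[_ hi].
  by rewrite colb_nonpow.
by rewrite colb_pow.
Qed.

Lemma row_block k m b a j : b < m -> a < 2^k-1-k ->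
  Ukm_ent k m (b * (2^k-1-k) + a) j =
   if j < m * (2^k-1-k) then (j %/ (2^k-1-k) == b) && Tk_ent k a (j %% (2^k-1-k))
   else if j < m * (2^k-1-k) + (m-1)*k then false
   else Rk_ent k a (j - (m * (2^k-1-k) + (m-1)*k)).
Proof.
move=> hb ha; rewrite /Ukm_ent.
set p := 2^k-1-k in ha *.
have p0 : 0 < p by lia.
have -> : b * p + a < m * p by nia.
by rewrite divnMDl // (divn_small ha) addn0 modnMDl (modn_small ha).
Qed.

Lemma ltF1 a e : (a + e < a) = false.
Proof. lia. Qed.

Lemma sum_delta m b X : b < m -> \sum_(0 <= i < m) (i == b) * X = X.
Proof.
move=> hb.
rewrite (@eq_big_nat _ _ _ 0 m _ (fun i => if i == b then X else 0)); last first.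
  by move=> i _; case: eqP; rewrite ?mul1n ?mul0n.
by rewrite -big_mkcond big_nat1_eq /= hb.
Qed.

Lemma rowsum k m b a (Q : nat -> bool) : b < m -> a < 2^k-1-k ->
  \sum_(0 <= j < m * (2^k-1-k) + (m-1)*k + k) (Q j && Ukm_ent k m (b * (2^k-1-k) + a) j)
  = \sum_(1 <= c < 2^k) (Q (colb k m b c) && Uk_lab k a c).
Proof.
move=> hb ha.
rewrite regions (labsum k m b (fun c x => Q x && Uk_lab k a c)).
set p := 2^k-1-k in ha *.
have p0 : 0 < p by lia.
have hmid : \sum_(0 <= e < (m - 1) * k) (Q (m * p + e) && Ukm_ent k m (b * p + a) (m * p + e)) = 0.
  rewrite big_nat_cond big1 // => e /andP[/andP[_ he] _].
  rewrite row_block //.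
  rewrite ltF1.
  have -> : (m * p + e < m * p + (m - 1) * k) by rewrite ltn_add2l.
  by rewrite andbF.
rewrite hmid addn0; congr (_ + _); last first.
  apply: eq_big_nat => i /andP[_ hi]; rewrite row_block //.
  rewrite -addnA ltF1 addnA ltF1.
  by rewrite addKn.
rewrite (@eq_big_nat _ _ _ 0 m _
   (fun b' => (b' == b) * \sum_(0 <= q < p) (Q (b * p + q) && Uk_lab k a (nth 0 (nonpow k) q)))); last first.
  move=> b' /andP[_ hb'].
  case: (eqVneq b' b) => [->|hne]; rewrite ?mul1n ?mul0n.
    apply: eq_big_nat => q /andP[_ hq].
    rewrite row_block // ifT; last by nia.
    by rewrite divnMDl // (divn_small hq) addn0 modnMDl (modn_small hq) eqxx.
  rewrite big_nat_cond big1 // => q /andP[/andP[_ hq] _].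
  rewrite row_block // ifT; last by nia.
  by rewrite divnMDl // (divn_small hq) addn0 (negbTE hne) andbF.
by rewrite sum_delta.
Qed.

Lemma idrow_arith A B k e r j : e < B -> r < k ->
 (if j < A then false else if j < A + B then j - A == e else j - (A+B) == r) =
 (j \in [:: A + e; A + B + r]).
Proof.
move=> he hr; rewrite !inE.
case: (ltnP j A) => h1.
  by apply/esym/negbTE; apply/negP => /orP[] /eqP; lia.
case: (ltnP j (A + B)) => h2.
  apply/eqP/orP => [/eqP h|[]/eqP h]; [left; apply/eqP; lia|lia|lia].
apply/eqP/orP => [/eqP h|[]/eqP h]; [right; apply/eqP; lia|lia|lia].
Qed.

Lemma idrowsum k m e (Q : nat -> bool) : e < (m-1)*k ->
  \sum_(0 <= j < m * (2^k-1-k) + (m-1)*k + k) (Q j && Ukm_ent k m (m * (2^k-1-k) + e) j)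
  = Q (m * (2^k-1-k) + e) + Q (m * (2^k-1-k) + (m-1)*k + e %% k).
Proof.
move=> he.
have k0 : 0 < k by case: k he => //; rewrite muln0.
have hr : e %% k < k by rewrite ltn_mod.
rewrite (@eq_big_nat _ _ _ 0 _ _ (fun j => nat_of_bool (Q j && (j \in [:: m * (2^k-1-k) + e; m * (2^k-1-k) + (m-1)*k + e %% k])))).
  rewrite memsum /=; first by rewrite addn0.
    by rewrite inE; apply/negP => /eqP; lia.
  by rewrite /= andbT; apply/andP; split; lia.
move=> j _; congr (_ && _).
rewrite -(@idrow_arith (m*(2^k-1-k)) ((m-1)*k) k e (e %% k) j he hr) /Ukm_ent ltF1 addKn.
done.
Qed.

Lemma labcount k a (P : nat -> bool) : a < 2^k-1-k ->
  \sum_(1 <= c < 2^k) (P c && Uk_lab k a c) =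
  count P [:: nth 0 (nonpow k) a;
              nth 0 (nonpow k) a - 2^(trunc_log 2 (nth 0 (nonpow k) a));
              2^(trunc_log 2 (nth 0 (nonpow k) a))].
Proof.
move=> ha; have hs : a < size (nonpow k) by rewrite size_nonpow.
have := mem_nth 0 hs; rewrite mem_nonpow => /andP[/andP[r0 r1] hnp].
rewrite (@eq_big_nat _ _ _ 1 _ _ (fun c => nat_of_bool (P c && (c \in [:: nth 0 (nonpow k) a;
              nth 0 (nonpow k) a - 2^(trunc_log 2 (nth 0 (nonpow k) a));
              2^(trunc_log 2 (nth 0 (nonpow k) a))])))); last first.
  by move=> c _; rewrite /Uk_lab !inE.
move: hnp; rewrite /is_pow2.
set r := nth 0 (nonpow k) a in r0 r1 *; set t := trunc_log 2 r => hne.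
have h1 : 2 ^ t <= r by apply: trunc_logP.
have h2 : r < 2 ^ t.+1 by apply: trunc_log_ltn.
move: h2; rewrite expnS => h2.
have h3 : 2 ^ t < r by rewrite ltn_neqAle hne h1.
apply: memsum.
  rewrite /= !inE !negb_or andbT; repeat (apply/andP; split); apply/negP => /eqP; lia.
rewrite /= andbT; repeat (apply/andP; split); lia.
Qed.

Theorem mainTheorem7 (k m : nat) (hk : 2 <= k) (hm : 1 <= m) :
  2 ^ (k - 1) * m <= u (Ukm k m).
Proof.
have hX : 2 ^ (k - 1) * 2 = 2 ^ k by rewrite -expnSr; congr (2 ^ _); lia.
have hkX : k < 2 ^ k by apply: ltn_expl.
rewrite /u; apply: (big_ind (fun x => 2 ^ (k - 1) * m <= x)).
- nia.
- by move=> x y hx hy; rewrite leq_min hx hy.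
move=> S /andP[Sne hfree].
set p := 2 ^ k - 1 - k.
set N := m * p + (m - 1) * k + k.
set base := m * p + (m - 1) * k.
pose Q x := [exists j : 'I_N, (j \in S) && (val j == x)].
have Qval : forall j : 'I_N, Q j = (j \in S).
  move=> j; apply/existsP/idP => [[j' /andP[h /eqP e]]|h].
    by rewrite (_ : j = j') // ; apply: val_inj.
  by exists j; rewrite h eqxx.
have rowc : forall i, i < base -> \sum_(0 <= j < N) (Q j && Ukm_ent k m i j) != 1.
  move=> i hi; move/forallP: hfree => /(_ (Ordinal hi)).
  suff -> : \sum_(0 <= j < N) (Q j && Ukm_ent k m i j) = \sum_(j in S) (Ukm k m (Ordinal hi) j : nat) by [].
  rewrite big_mkord [RHS]big_mkcond /=; apply: eq_bigr => j _.
  by rewrite Qval mxE; case: (j \in S).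
have hW : forall b, b < m -> W k (fun c => Q (colb k m b c)).
  move=> b hb r /andP[r0 r1] hnp.
  have rin : r \in nonpow k by rewrite mem_nonpow r0 r1.
  have ha : index r (nonpow k) < p by rewrite /p -size_nonpow index_mem.
  have := rowc (b * p + index r (nonpow k)) ltac:(nia).
  by rewrite rowsum // labcount // nth_index.
have hid : forall e, e < (m - 1) * k -> Q (m * p + e) = Q (base + e %% k).
  move=> e he; have := rowc (m * p + e) ltac:(lia).
  rewrite idrowsum //.
  by case: (Q (m * p + e)); case: (Q (base + e %% k)).
set Y := \sum_(0 <= j < k) Q (base + j).
have hL : forall b, \sum_(1 <= c < 2^k) Q (colb k m b c) =
    \sum_(0 <= q < p) Q (b * p + q) + Y.
  by move=> b; rewrite (labsum k m b (fun c x => nat_of_bool (Q x))).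
have card : #|S| = \sum_(0 <= b < m) \sum_(1 <= c < 2^k) Q (colb k m b c).
  have -> : #|S| = \sum_(0 <= j < N) Q j.
    rewrite -sum1_card big_mkcond big_mkord /=; apply: eq_bigr => j _.
    by rewrite Qval; case: (j \in S).
  rewrite regions.
  rewrite (@eq_big_nat _ _ _ 0 ((m - 1) * k) _ (fun e => nat_of_bool (Q (base + e %% k)))); last first.
    by move=> e /andP[_ he]; rewrite hid.
  rewrite (periodsum (m - 1) k (fun x => nat_of_bool (Q (base + x)))).
  rewrite (eq_big_nat _ _ (fun b _ => hL b)) big_split /= sum_nat_const_nat.
  have -> : \sum_(0 <= j < k) Q (m * p + (m - 1) * k + j) = Y by [].
  by rewrite subn0 -addnA -mulSnr subn1 prednK.
have hpow : forall b e, e < k -> Q (colb k m b (2 ^ e)) = Q (base + (k - 1 - e)).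
  move=> b e he; have he' : k - 1 - e < k by lia.
  rewrite -(@colb_pow k m b _ he'); congr (Q (colb _ _ _ (2 ^ _))); lia.
case: (posnP Y) => hY.
  have hQ0 : forall j, j < k -> ~~ Q (base + j).
    move=> j hj; apply/negP => hq.
    have : Y != 0.
      rewrite /Y sum_nat_seq_neq0; apply/hasP; exists j; first by rewrite mem_index_iota.
      by rewrite /= hq.
    by rewrite hY.
  have hL0 : forall b, b < m -> \sum_(1 <= c < 2^k) Q (colb k m b c) = 0.
    move=> b hb; rewrite big_nat_cond big1 // => c /andP[hc _].
    have hnot : forall e, e < k -> ~~ Q (colb k m b (2 ^ e)).
      by move=> e he; rewrite hpow //; apply: hQ0; lia.
    by rewrite (negbTE (@lemB _ _ (hW b hb) hnot _ hc)).
  move/eqP: Sne; case; apply/eqP; rewrite -cards_eq0 card big_nat_cond big1 //.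
  by move=> b /andP[/andP[_ hb] _]; apply: hL0.
have [j hj hq] : exists2 j, j < k & Q (base + j).
  have : Y != 0 by rewrite -lt0n.
  rewrite /Y sum_nat_seq_neq0 => /hasP[j]; rewrite mem_index_iota => /andP[_ hj] /= hq.
  by exists j => //; move: hq; case: (Q (base + j)).
rewrite card.
have : \sum_(0 <= b < m) 2 ^ (k - 1) <= \sum_(0 <= b < m) \sum_(1 <= c < 2^k) Q (colb k m b c).
  rewrite big_nat_cond [X in _ <= X]big_nat_cond; apply: leq_sum => b /andP[/andP[_ hb] _].
  have he : k - 1 - j < k by lia.
  have := @lemA _ _ (hW b hb) (ex_intro2 _ _ (k - 1 - j) he _); rewrite subn1; apply.
  have e1 : k - 1 - (k.-1 - j) = j by lia.
  have e2 : k.-1 - j < k by lia.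
  by rewrite /= hpow // e1.
by rewrite sum_nat_const_nat subn0 mulnC.
Qed.
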